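(* Let $p$ be a prime, let $M_2(\mathbb{F}_p)$ be the ring of $2\times 2$ matrices over $\mathbb{F}_p$, $GL(2,p)$ its group of invertible matrices, and $\chi(A)=\exp\bigl(2\pi i\,\mathrm{Tr}(A)/p\bigr)$ for $A\in M_2(\mathbb{F}_p)$. Let $I_L$ be a minimal left ideal of $M_2(\mathbb{F}_p)$. Then for every nonzero $B\in I_L$, \[\sum_{u\in GL(2,p)}\chi(uB)=p-p^2.\]
   Context: $\mathrm{Tr}(A)\in\mathbb{F}_p$ denotes the trace of $A$, identified with an integer in $\{0,\dots,p-1\}$ in the exponent. *)

(* Defs.v *)
From HB Require Import structures.
From mathcomp Require Import all_boot all_order all_algebra.
From mathcomp Require Import complex.
From mathcomp Require Import reals trigo.
Set Implicit Arguments. Unset Strict Implicit. Unset Printing Implicit Defensive.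
Import Order.TTheory GRing.Theory Num.Theory.
Local Open Scope ring_scope.
Local Open Scope complex_scope.

Definition chi (R : realType) (p : nat) (A : 'M['F_p]_2) : R[i] :=
  let t : R := (2 * pi * (nat_of_ord (\tr A))%:R) / p%:R in
  (cos t +i* sin t)%C.

Definition left_ideal (p : nat) (I : {set 'M['F_p]_2}) : Prop :=
  [/\ 0 \in I,
      (forall x y, x \in I -> y \in I -> x + y \in I) &
      (forall r x, x \in I -> r *m x \in I)].

Definition minimal_left_ideal (p : nat) (I : {set 'M['F_p]_2}) : Prop :=
  [/\ left_ideal I, I != [set 0] &
      forall J : {set 'M['F_p]_2}, left_ideal J -> J \subset I ->
        J = [set 0] \/ J = I].

(* Main.v *)
Require Import Defs.
From HB Require Import structures.
From mathcomp Require Import all_boot all_order all_algebra.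
From mathcomp Require Import complex.
From mathcomp Require Import reals trigo.
From mathcomp Require Import ring lra.
Import Order.TTheory GRing.Theory Num.Theory.
Local Open Scope ring_scope.

Module Aux.
Local Open Scope complex_scope.
Section E.
Variable R : realType.
Variable p : nat.
Hypothesis hp : prime p.

Definition E (n : nat) : R[i] :=
  let t : R := (2 * pi * n%:R) / p%:R in (cos t +i* sin t)%C.

Lemma ED m n : E (m + n) = E m * E n.
Proof.
rewrite /E natrD mulrDr mulrDl cosD sinD.
apply/eqP; rewrite eq_complex /=; apply/andP; split; apply/eqP; ring.
Qed.

Lemma Ep : E p = 1.
Proof.
have p0 : p%:R != 0 :> R by rewrite pnatr_eq0 -lt0n prime_gt0.
have h2 : (2 * pi : R) = pi *+ 2 by rewrite mulr_natl.
rewrite /E mulfK // h2 cos2pi sin2pi.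
by [].
Qed.

Lemma Emod n : E n = E (n %% p)%N.
Proof.
rewrite {1}(div.divn_eq n p) ED.
elim: (n %/ p)%N => [|k IH]; first by rewrite mul0n /E mulr0 mul0r cos0 sin0 mul1r.
by rewrite mulSn ED Ep mul1r.
Qed.

Lemma valFpD (a b : 'F_p) : val (a + b) = ((val a + val b) %% p)%N.
Proof.
transitivity ((val a + val b) %% (Zp_trunc (pdiv p)).+2)%N; first by [].
move: (val a + val b)%N => k; by rewrite Fp_cast.
Qed.

Definition ee (a : 'F_p) := E (val a).

Lemma eeD a b : ee (a + b) = ee a * ee b.
Proof. by rewrite /ee valFpD -Emod ED. Qed.

Lemma ee0 : ee 0 = 1.
Proof. by rewrite /ee /E /= mulr0 mul0r cos0 sin0. Qed.

Lemma valFp1 : val (1 : 'F_p) = 1%N.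
Proof.
transitivity (1 %% (Zp_trunc (pdiv p)).+2)%N; first by [].
by rewrite Fp_cast // modn_small // prime_gt1.
Qed.

Lemma ee1 : ee 1 != 1.
Proof.
rewrite /ee valFp1 /E.
set y : R := pi / p%:R.
have p1 : (1 < p)%N by rewrite prime_gt1.
have pR : (0 < p%:R :> R) by rewrite ltr0n (ltn_trans _ p1).
have hy : 2 * pi * 1%:R / p%:R = y + y by rewrite /y mulr1 -mulrA mulr_natl mulr2n.
rewrite hy; apply/negP => /eqP /(congr1 (@complex.Re _)) /= h.
have sy : 0 < sin y.
  have y0 : 0 < y by rewrite /y divr_gt0 // pi_gt0.
  have [p2|p2] := eqVneq p 2.
    by rewrite /y p2 sin_pihalf.
  apply: sin_gt0_pihalf; rewrite y0 /= /y ltr_pM2l ?pi_gt0 //.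
  rewrite ltf_pV2 ?posrE ?ltr0n ?prime_gt0 //.
  rewrite (_ : (2 : R) = 2%:R) // ltr_nat.
  by rewrite ltn_neqAle eq_sym p2 p1.
move: h; rewrite cosD => h.
have := cos2Dsin2 y; rewrite !expr2 => c.
have : sin y * sin y = 0 by nra.
by move/eqP; rewrite mulf_eq0 orbb (gt_eqF sy).
Qed.

Lemma sum_ee : \sum_(a : 'F_p) ee a = 0.
Proof.
have h : \sum_(a : 'F_p) ee a = ee 1 * \sum_(a : 'F_p) ee a.
  rewrite mulr_sumr (reindex_inj (addrI 1)) /=.
  by apply: eq_bigr => a _; rewrite eeD.
have : (ee 1 - 1) * \sum_(a : 'F_p) ee a = 0 by rewrite mulrBl mul1r -h subrr.
by move/eqP; rewrite mulf_eq0 subr_eq0 (negbTE ee1) /= => /eqP.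
Qed.

Lemma cardFpR : (#|'F_p|%:R : R[i]) = p%:R.
Proof. by rewrite card_Fp. Qed.

Lemma cnt1 (c : 'F_p) : \sum_(x : 'F_p) ((x != c) : nat)%:R = (p%:R - 1 : R[i]).
Proof.
have -> : \sum_(x : 'F_p) ((x != c) : nat)%:R = \sum_(x : 'F_p) (1 - ((x == c) : nat)%:R : R[i]).
  by apply: eq_bigr => x _; case: (x == c); rewrite ?subrr ?subr0.
rewrite sumrB sumr_const cardFpR; congr (_ - _).
by rewrite (bigD1 c) //= eqxx big1 ?addr0 // => x /negbTE ->.
Qed.

Lemma sum_const_Fp (k : R[i]) : \sum_(x : 'F_p) k = p%:R * k.
Proof. by rewrite sumr_const card_Fp // mulr_natl. Qed.

Definition mk (x : ('F_p * 'F_p) * ('F_p * 'F_p)) : 'M['F_p]_2 :=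
  \matrix_(i, j) if i == 0 then (if j == 0 then x.1.1 else x.1.2)
                 else (if j == 0 then x.2.1 else x.2.2).

Definition unmk (u : 'M['F_p]_2) : ('F_p * 'F_p) * ('F_p * 'F_p) :=
  ((u 0 0, u 0 1), (u 1 0, u 1 1)).

Lemma mkK : cancel unmk mk.
Proof.
move=> u; apply/matrixP => i j; rewrite !mxE /=.
by case: i => [[|[|i]] Hi]; case: j => [[|[|j]] Hj] //=;
  congr (u _ _); apply: val_inj.
Qed.

Lemma unmkK : cancel mk unmk.
Proof. by move=> [[a b] [c d]]; rewrite /unmk !mxE. Qed.

Lemma det_mk x : \det (mk x) = x.1.1 * x.2.2 - x.1.2 * x.2.1.
Proof.
rewrite (expand_det_row _ 0) big_ord_recl big_ord1 /cofactor !det_mx11 !mxE /=.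
by rewrite /bump /= expr0 mul1r expr1 mulN1r mulrN.
Qed.

Lemma pair_sum (I J : finType) (G : I * J -> R[i]) :
  \sum_(x : I * J) G x = \sum_(i : I) \sum_(j : J) G (i, j).
Proof. by rewrite pair_bigA; apply: eq_bigr => -[]. Qed.

Lemma pair_sum4 (G : ('F_p * 'F_p) * ('F_p * 'F_p) -> R[i]) :
  \sum_x G x = \sum_(a : 'F_p) \sum_(b : 'F_p) \sum_(c : 'F_p) \sum_(d : 'F_p) G ((a, b), (c, d)).
Proof.
rewrite (pair_sum _ _ G).
rewrite (pair_sum _ _ (fun y => \sum_j G (y, j))).
apply: eq_bigr => a _; apply: eq_bigr => b _.
rewrite (pair_sum _ _ (fun z => G ((a, b), z))).
by [].
Qed.

Lemma natb_mul (b : bool) (x : R[i]) : (if b then x else 0) = x * (b : nat)%:R.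
Proof. by case: b; rewrite ?mulr1 ?mulr0. Qed.

Lemma countGL :
  \sum_(u : 'M['F_p]_2 | u \in unitmx) ee (u 0 0) = p%:R - (p ^ 2)%:R.
Proof.
have -> : \sum_(u : 'M['F_p]_2 | u \in unitmx) ee (u 0 0) =
  \sum_(x : ('F_p * 'F_p) * ('F_p * 'F_p)) (if mk x \in unitmx then ee (mk x 0 0) else 0).
  rewrite (reindex mk); last by exists unmk => x _; [exact: unmkK | exact: mkK].
  by rewrite big_mkcond.
rewrite pair_sum4.
have e1 : forall a b c d : 'F_p,
  (if mk ((a, b), (c, d)) \in unitmx then ee (mk ((a, b), (c, d)) 0 0) else 0)
  = ee a * ((a * d - b * c != 0) : nat)%:R.
  move=> a b c d; rewrite unitmxE unitfE det_mk /= natb_mul !mxE /=.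
  by [].
under eq_bigr => a _ do under eq_bigr => b _ do under eq_bigr => c _ do
  under eq_bigr => d _ do rewrite e1.
under eq_bigr => a _ do under eq_bigr => b _ do under eq_bigr => c _ do rewrite -mulr_sumr.
under eq_bigr => a _ do under eq_bigr => b _ do rewrite -mulr_sumr.
under eq_bigr => a _ do rewrite -mulr_sumr.
have N0 : \sum_(b : 'F_p) \sum_(c : 'F_p) \sum_(d : 'F_p) ((0 * d - b * c != 0) : nat)%:R
    = p%:R * (p%:R - 1) ^+ 2 :> R[i].
  under eq_bigr => b _ do under eq_bigr => c _ do under eq_bigr => d _ do
    rewrite mul0r sub0r oppr_eq0 mulf_eq0 negb_or -mulnb natrM.
  under eq_bigr => b _ do under eq_bigr => c _ do rewrite sum_const_Fp mulrA.
  under eq_bigr => b _ do rewrite -mulr_sumr.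
  under eq_bigr => b _ do rewrite (cnt1 0).
  under eq_bigr => b _ do rewrite mulrAC.
  rewrite -mulr_sumr (cnt1 0); ring.
have Na : forall a : 'F_p, a != 0 ->
    \sum_(b : 'F_p) \sum_(c : 'F_p) \sum_(d : 'F_p) ((a * d - b * c != 0) : nat)%:R
    = p%:R ^+ 2 * (p%:R - 1) :> R[i].
  move=> a a0.
  have ed : forall b c d : 'F_p, (a * d - b * c != 0) = (d != b * c / a).
    move=> b c d; rewrite subr_eq0; congr negb; apply/eqP/eqP => [<-|->].
      by rewrite mulrC mulKf.
    by rewrite mulrC divfK.
  under eq_bigr => b _ do under eq_bigr => c _ do under eq_bigr => d _ do rewrite ed.
  under eq_bigr => b _ do under eq_bigr => c _ do rewrite (cnt1 (b * c / a)).
  under eq_bigr => b _ do rewrite sum_const_Fp.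
  rewrite sum_const_Fp; ring.
rewrite (bigD1 0) //= N0 ee0 mul1r.
rewrite (eq_bigr (fun a => ee a * (p%:R ^+ 2 * (p%:R - 1)))); last by move=> a a0; rewrite Na.
rewrite -mulr_suml.
have S1 : \sum_(a | a != 0) ee a = -1.
  have := sum_ee; rewrite (bigD1 0) //= ee0 => /eqP; rewrite addrC addr_eq0 => /eqP //.
rewrite S1 natrX; ring.
Qed.
End E.

End Aux.
Import Aux.

Lemma conjK (F : fieldType) n (U L v : 'M[F]_n) : U \in unitmx -> L \in unitmx ->
  U *m (invmx U *m v *m invmx L) *m L = v.
Proof. by move=> Uu Lu; rewrite !mulmxA mulmxV // mul1mx -mulmxA mulVmx // mulmx1. Qed.

Lemma conjK' (F : fieldType) n (U L v : 'M[F]_n) : U \in unitmx -> L \in unitmx ->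
  invmx U *m (U *m v *m L) *m invmx L = v.
Proof. by move=> Uu Lu; rewrite !mulmxA mulVmx // mul1mx -mulmxA mulmxV // mulmx1. Qed.

Lemma B_not_unit (p : nat) (IL : {set 'M['F_p]_2}) (hIL : minimal_left_ideal IL)
  (B : 'M['F_p]_2) (hB : B \in IL) : B \notin unitmx.
Proof.
apply/negP => Bu.
case: hIL => [[I0 ID IM] INZ Imin].
have ILT : forall X, X \in IL.
  move=> X; have -> : X = (X *m invmx B) *m B by rewrite -mulmxA mulVmx // mulmx1.
  exact: IM.
pose D : 'M['F_p]_2 := delta_mx 1 1.
pose J := [set X : 'M['F_p]_2 | X *m D == 0].
have lJ : left_ideal J.
  split.
  - by rewrite inE mul0mx.
  - by move=> x y; rewrite !inE mulmxDl => /eqP -> /eqP ->; rewrite addr0.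
  - by move=> r x; rewrite !inE -mulmxA => /eqP ->; rewrite mulmx0.
have sJ : J \subset IL by apply/subsetP => x _; exact: ILT.
have D0 : D != 0.
  apply/eqP => /matrixP /(_ 1 1); rewrite !mxE !eqxx /= => /eqP.
  by rewrite oner_eq0.
case: (Imin J lJ sJ) => [J0 | JI].
- have : delta_mx 0 0 \in J.
    by rewrite inE /D mul_delta_mx_cond.
  rewrite J0 inE => /eqP /matrixP /(_ 0 0); rewrite !mxE !eqxx /= => /eqP.
  by rewrite oner_eq0.
- have : (1%:M : 'M['F_p]_2) \in J by rewrite JI ILT.
  by rewrite inE mul1mx (negbTE D0).
Qed.

Lemma tr_pid (p : nat) (u : 'M['F_p]_2) : \tr (u *m pid_mx 1) = u 0 0.
Proof.
rewrite /mxtrace big_ord_recl big_ord1 !mxE !big_ord_recl !big_ord0 !mxE /=.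
by rewrite !mulr0 !addr0 mulr1.
Qed.

Theorem theorem2p4 (R : realType) (p : nat) (hp : prime p)
    (IL : {set 'M['F_p]_2}) (hIL : minimal_left_ideal IL)
    (B : 'M['F_p]_2) (hB : B \in IL) (hB0 : B != 0) :
  \sum_(u : 'M['F_p]_2 | u \in unitmx) chi R (u *m B)
    = (p%:R - (p ^ 2)%:R : R[i]).
Proof.
have nu := @B_not_unit _ _ hIL _ hB.
have rk : \rank B = 1%N.
  have r0 : \rank B != 0%N by rewrite mxrank_eq0.
  have r2 : ~~ (2 <= \rank B)%N by rewrite row_leq_rank row_free_unit.
  have := rank_leq_row B; move: r0 r2; case: (\rank B) => [|[|[|k]]] //.
pose L := col_ebase B; pose U := row_ebase B; pose P : 'M['F_p]_2 := pid_mx 1.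
have eB : L *m P *m U = B by have := mulmx_ebase B; rewrite rk.
have Lu : L \in unitmx by exact: col_ebase_unit.
have Uu : U \in unitmx by exact: row_ebase_unit.
have hL1 : invmx L *m L = 1%:M := mulVmx Lu.
have hL2 : L *m invmx L = 1%:M := mulmxV Lu.
have hU1 : invmx U *m U = 1%:M := mulVmx Uu.
have hU2 : U *m invmx U = 1%:M := mulmxV Uu.
have -> : \sum_(u : 'M['F_p]_2 | u \in unitmx) chi R (u *m B)
    = \sum_(u : 'M['F_p]_2 | u \in unitmx) chi R ((U *m u *m L) *m P).
  by apply: eq_bigr => u _; rewrite -eB /chi !mulmxA mxtrace_mulC !mulmxA.
rewrite (reindex (fun v => invmx U *m v *m invmx L)) /=; last first.
  exists (fun u => U *m u *m L) => v _.
    exact: conjK.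
  exact: conjK'.
rewrite (eq_bigl (fun v => v \in unitmx)); last first.
  by move=> v; rewrite !unitmx_mul !unitmx_inv Lu Uu andbT.
rewrite -(@countGL R p hp).
apply: eq_bigr => v _.
rewrite conjK //.
by rewrite /chi /ee /E tr_pid.
Qed.
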